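(* Let $n \ge 1$, let $Q \ge 0$, and let $q_1,\dots,q_n \in [0,Q]$ be demands. Let $d_{i,i+1}$ ($1 \le i \le n-1$), $d_{0,i}$ and $d_{i,0}$ ($1 \le i \le n$) be real numbers. For $1 \le i \le n$ put $D[i] = \sum_{k=1}^{i-1} d_{k,k+1}$ and $Q[i] = \sum_{k=1}^{i} q_k$, with $Q[0]=0$. Let $\mathcal{G}=(\mathcal{V},\mathcal{A})$ be the directed acyclic graph with $\mathcal{V}=\{0,1,\dots,n\}$ and with an arc $(i,j)$, for $0 \le i<j\le n$, if and only if $Q[j]-Q[i] \le Q$; the arc $(i,j)$ has cost $c(i,j) = d_{0,i+1} + D[j] - D[i+1] + d_{j,0}$. Then there is an algorithm that computes a minimum-cost path from $0$ to $n$ in $\mathcal{G}$ (together with its cost) in $\mathcal{O}(n)$ time.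
   Context: This is the ''Split'' problem of route-first cluster-second heuristics for the capacitated vehicle routing problem: customers $1,\dots,n$ are given in a fixed order (a ''giant tour''), $d_{0,i}$ and $d_{i,0}$ are the distances from the depot to customer $i$ and back, $d_{i,i+1}$ is the distance between consecutive customers, and an arc $(i,j)$ represents a route leaving the depot, visiting customers $i+1,\dots,j$ in order and returning to the depot, which is allowed only if its total demand is at most the vehicle capacity $Q$. A path from $0$ to $n$ thus corresponds to a partition of the giant tour into consecutive feasible routes, and its cost is the total routing cost. Running time is measured in the model where arithmetic operations and comparisons on reals take constant time. *)

(* Defs.v *)
From Stdlib Require Import Reals Arith List Lia.
Open Scope R_scope.

(* Inputs are functions on nat; only indices in the ranges of the      *)
(* paper are ever used:                                                *)
(*   q i      = q_i          (1 <= i <= n)                             *)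
(*   d0 i     = d_{0,i}      (1 <= i <= n)                             *)
(*   dback i  = d_{i,0}      (1 <= i <= n)                             *)
(*   dnext i  = d_{i,i+1}    (1 <= i <= n-1)                           *)

Fixpoint psum (f : nat -> R) (m : nat) : R :=
  match m with
  | O => 0
  | S m' => psum f m' + f m
  end.

Definition Qcum (q : nat -> R) (i : nat) : R := psum q i.

Definition Dcum (dnext : nat -> R) (i : nat) : R := psum dnext (i - 1).

Definition arc (n : nat) (Qcap : R) (q : nat -> R) (i j : nat) : Prop :=
  (i < j)%nat /\ (j <= n)%nat /\ Qcum q j - Qcum q i <= Qcap.

Definition arc_cost (d0 dback dnext : nat -> R) (i j : nat) : R :=
  d0 (i + 1)%nat + Dcum dnext j - Dcum dnext (i + 1)%nat + dback j.

Fixpoint valid_from (n : nat) (Qcap : R) (q : nat -> R) (i : nat) (l : list nat)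
  : Prop :=
  match l with
  | nil => i = n
  | j :: l' => arc n Qcap q i j /\ valid_from n Qcap q j l'
  end.

Fixpoint cost_from (d0 dback dnext : nat -> R) (i : nat) (l : list nat) : R :=
  match l with
  | nil => 0
  | j :: l' => arc_cost d0 dback dnext i j + cost_from d0 dback dnext j l'
  end.

Definition is_min_cost_path (n : nat) (Qcap : R) (q d0 dback dnext : nat -> R)
  (p : list nat) (c : R) : Prop :=
  exists l, p = 0%nat :: l /\ valid_from n Qcap q 0 l /\
    cost_from d0 dback dnext 0 l = c /\
    forall l', valid_from n Qcap q 0 l' -> c <= cost_from d0 dback dnext 0 l'.

(* Computational model: a unit-cost real RAM.                          *)
(* Each memory write, each conditional test and each loop test costs   *)
(* one unit (expressions inside a fixed program have bounded size, so  *)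
(* evaluating them is constant time).  Arithmetic: +,- (truncated) and *)
(* comparisons on naturals; +,-,* and comparisons on reals.  No        *)
(* real->nat conversion (no floor), no multiplication on naturals.     *)

Inductive val : Type := VN (k : nat) | VR (r : R).

Definition mem := nat -> val.

Inductive binop : Type := OAdd | OSub | OMul | OLt | OLe | OEq.

Definition b2v (b : bool) : val := if b then VN 1 else VN 0.

Definition eval_binop (o : binop) (v1 v2 : val) : option val :=
  match o, v1, v2 with
  | OAdd, VN a, VN b => Some (VN (a + b))
  | OAdd, VR a, VR b => Some (VR (a + b))
  | OSub, VN a, VN b => Some (VN (a - b))
  | OSub, VR a, VR b => Some (VR (a - b))
  | OMul, VR a, VR b => Some (VR (a * b))
  | OLt, VN a, VN b => Some (b2v (Nat.ltb a b))
  | OLt, VR a, VR b => Some (b2v (if Rlt_dec a b then true else false))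
  | OLe, VN a, VN b => Some (b2v (Nat.leb a b))
  | OLe, VR a, VR b => Some (b2v (if Rle_dec a b then true else false))
  | OEq, VN a, VN b => Some (b2v (Nat.eqb a b))
  | OEq, VR a, VR b => Some (b2v (if Req_EM_T a b then true else false))
  | _, _, _ => None
  end.

Inductive expr : Type :=
  | ENat (k : nat)
  | EReal (r : R)
  | ELoad (a : expr)
  | EBin (o : binop) (e1 e2 : expr).

Fixpoint eval (m : mem) (e : expr) : option val :=
  match e with
  | ENat k => Some (VN k)
  | EReal r => Some (VR r)
  | ELoad a => match eval m a with Some (VN x) => Some (m x) | _ => None end
  | EBin o e1 e2 =>
      match eval m e1, eval m e2 with
      | Some v1, Some v2 => eval_binop o v1 v2
      | _, _ => None
      end
  end.

Inductive stmt : Type :=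
  | SSkip
  | SStore (a e : expr)
  | SSeq (s1 s2 : stmt)
  | SIf (b : expr) (s1 s2 : stmt)
  | SWhile (b : expr) (s : stmt).

Definition upd (m : mem) (x : nat) (v : val) : mem :=
  fun y => if Nat.eqb y x then v else m y.

Inductive exec : stmt -> mem -> nat -> mem -> Prop :=
  | ExSkip m : exec SSkip m 0 m
  | ExStore a e m x v :
      eval m a = Some (VN x) -> eval m e = Some v ->
      exec (SStore a e) m 1 (upd m x v)
  | ExSeq s1 s2 m t1 m1 t2 m2 :
      exec s1 m t1 m1 -> exec s2 m1 t2 m2 -> exec (SSeq s1 s2) m (t1 + t2) m2
  | ExIfT b s1 s2 m k t m' :
      eval m b = Some (VN (S k)) -> exec s1 m t m' -> exec (SIf b s1 s2) m (S t) m'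
  | ExIfF b s1 s2 m t m' :
      eval m b = Some (VN 0) -> exec s2 m t m' -> exec (SIf b s1 s2) m (S t) m'
  | ExWhileF b s m :
      eval m b = Some (VN 0) -> exec (SWhile b s) m 1 m
  | ExWhileT b s m k t1 m1 t2 m2 :
      eval m b = Some (VN (S k)) -> exec s m t1 m1 ->
      exec (SWhile b s) m1 t2 m2 -> exec (SWhile b s) m (S (t1 + t2)) m2.

(* Input layout:
     mem[0] = n, mem[1] = Q,
     for 1 <= i <= n:  mem[4i] = q_i, mem[4i+1] = d_{0,i},
                       mem[4i+2] = d_{i,0},
                       mem[4i+3] = d_{i,i+1} (if i < n),
     all other cells hold the natural number 0. *)
Definition input_mem (n : nat) (Qcap : R) (q d0 dback dnext : nat -> R) : mem :=
  fun a =>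
    if Nat.eqb a 0 then VN n
    else if Nat.eqb a 1 then VR Qcap
    else
      let i := (a / 4)%nat in
      if andb (Nat.leb 1 i) (Nat.leb i n) then
        match (a mod 4)%nat with
        | 0%nat => VR (q i)
        | 1%nat => VR (d0 i)
        | 2%nat => VR (dback i)
        | _ => if Nat.ltb i n then VR (dnext i) else VN 0
        end
      else VN 0.

Fixpoint read_nats (m : mem) (base k : nat) : option (list nat) :=
  match k with
  | O => Some nil
  | S k' =>
      match m base, read_nats m (S base) k' with
      | VN x, Some l => Some (x :: l)
      | _, _ => None
      end
  end.

(* Output layout: mem[0] = cost (a real), mem[1] = k (number of vertices
   of the path), mem[2..k+1] = the vertices of the path, in order. *)

(* Main.v *)
Require Import Defs.
From Stdlib Require Import Reals Arith List Lia Lra FunctionalExtensionality.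
Open Scope R_scope.

Lemma upd_eq (m : mem) x y v : y = x -> upd m x v y = v.
Proof. intros ->. unfold upd. now rewrite Nat.eqb_refl. Qed.
Lemma upd_neq (m : mem) x y v : y <> x -> upd m x v y = m y.
Proof. intros H. unfold upd. apply Nat.eqb_neq in H. now rewrite H. Qed.
Lemma upd_upd (m : mem) x a b : upd (upd m x a) x b = upd m x b.
Proof. apply functional_extensionality; intro y. unfold upd. now destruct (Nat.eqb y x). Qed.
Lemma upd_same (m : mem) x : upd m x (m x) = m.
Proof. apply functional_extensionality; intro y. unfold upd.
  destruct (Nat.eqb_spec y x); subst; auto. Qed.
Lemma upd_comm (m : mem) x y a b : x <> y -> upd (upd m x a) y b = upd (upd m y b) x a.
Proof. intros H. apply functional_extensionality; intro z. unfold upd.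
  destruct (Nat.eqb_spec z y); destruct (Nat.eqb_spec z x); subst; auto. congruence. Qed.

Definition add e1 e2 := EBin OAdd e1 e2.
Definition NE := ELoad (ENat 0).
Definition WE := add (add (add (add NE NE) NE) NE) (ENat 4).
Definition VA k := add WE (ENat k).
Definition RV k := ELoad (VA k).
Definition EB0 := add WE (ENat 10).
Definition EB1 := add EB0 (add NE (ENat 1)).
Definition EB2 := add EB1 (add NE (ENat 1)).
Definition EB3 := add EB2 (add NE (ENat 1)).
Definition IA r e := add (add (add (add e e) e) e) (ENat r).
(* vars: 0 J, 1 HD, 2 TL, 3 DJ, 4 QJ, 5 P, 6 H, 7 X, 8 K, 9 POS
   arrays: EB0 QC, EB1 V, EB2 PR, EB3 DQ *)

Definition FLOOP :=
  SWhile (EBin OLt (ELoad (ENat 1)) (EBin OSub (RV 4) (ELoad (add EB0 (ELoad (add EB3 (RV 1)))))))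
         (SStore (VA 1) (add (RV 1) (ENat 1))).

Definition BLOOP :=
  SWhile (EBin OLt (RV 6) (RV 2))
    (SIf (EBin OLe (ELoad (add EB1 (RV 0)))
                   (ELoad (add EB1 (ELoad (add EB3 (EBin OSub (RV 2) (ENat 1)))))))
         (SStore (VA 2) (EBin OSub (RV 2) (ENat 1)))
         (SStore (VA 6) (RV 2))).

Definition THENB :=
  SSeq (SStore (VA 3) (EBin OAdd (RV 3) (ELoad (IA 3 (RV 0)))))
 (SSeq (SStore (add EB1 (RV 0)) (EBin OSub (EBin OAdd (RV 5) (ELoad (IA 1 (add (RV 0) (ENat 1))))) (RV 3)))
 (SSeq (SStore (VA 6) (RV 1))
 (SSeq BLOOP
 (SSeq (SStore (add EB3 (RV 2)) (RV 0))
       (SStore (VA 2) (add (RV 2) (ENat 1))))))).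

Definition BODY :=
  SSeq (SStore (VA 4) (EBin OAdd (RV 4) (ELoad (IA 0 (RV 0)))))
 (SSeq (SStore (add EB0 (RV 0)) (RV 4))
 (SSeq FLOOP
 (SSeq (SStore (VA 5) (EBin OAdd (EBin OAdd (ELoad (add EB1 (ELoad (add EB3 (RV 1))))) (RV 3))
                          (ELoad (IA 2 (RV 0)))))
 (SSeq (SStore (add EB2 (RV 0)) (ELoad (add EB3 (RV 1))))
 (SSeq (SIf (EBin OLt (RV 0) NE) THENB SSkip)
       (SStore (VA 0) (add (RV 0) (ENat 1)))))))).

Definition MAIN := SWhile (EBin OLt (RV 0) (add NE (ENat 1))) BODY.

Definition INIT :=
  SSeq (SStore (VA 0) (ENat 1))
 (SSeq (SStore (VA 2) (ENat 1))
 (SSeq (SStore (VA 3) (EReal 0))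
 (SSeq (SStore (VA 4) (EReal 0))
 (SSeq (SStore (add EB0 (ENat 0)) (EReal 0))
       (SStore (add EB1 (ENat 0)) (ELoad (IA 1 (ENat 1)))))))).

Definition LOOP1 := SWhile (EBin OLt (ENat 0) (RV 7))
  (SSeq (SStore (VA 7) (ELoad (add EB2 (RV 7)))) (SStore (VA 8) (add (RV 8) (ENat 1)))).

Definition LOOP2 := SWhile (EBin OLt (ENat 1) (RV 9))
  (SSeq (SStore (RV 9) (RV 7))
  (SSeq (SStore (VA 7) (ELoad (add EB2 (RV 7))))
        (SStore (VA 9) (EBin OSub (RV 9) (ENat 1))))).

Definition RECON :=
  SSeq (SStore (VA 7) NE)
 (SSeq (SStore (VA 8) (ENat 1))
 (SSeq LOOP1
 (SSeq (SStore (VA 7) NE)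
 (SSeq (SStore (VA 9) (add (RV 8) (ENat 1)))
 (SSeq LOOP2
 (SSeq (SStore (ENat 1) (RV 8))
       (SStore (ENat 0) (RV 5)))))))).

Definition PROG := SSeq INIT (SSeq MAIN RECON).

Lemma ev_nat m k : eval m (ENat k) = Some (VN k). Proof. reflexivity. Qed.
Lemma ev_real m r : eval m (EReal r) = Some (VR r). Proof. reflexivity. Qed.
Lemma ev_load m e x v : eval m e = Some (VN x) -> m x = v -> eval m (ELoad e) = Some v.
Proof. intros H1 H2. simpl. now rewrite H1, H2. Qed.
Lemma ev_addN m e1 e2 a b c : eval m e1 = Some (VN a) -> eval m e2 = Some (VN b) ->
  (a + b)%nat = c -> eval m (EBin OAdd e1 e2) = Some (VN c).
Proof. intros H1 H2 H3. simpl. now rewrite H1, H2, H3. Qed.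
Lemma ev_subN m e1 e2 a b c : eval m e1 = Some (VN a) -> eval m e2 = Some (VN b) ->
  (a - b)%nat = c -> eval m (EBin OSub e1 e2) = Some (VN c).
Proof. intros H1 H2 H3. simpl. now rewrite H1, H2, H3. Qed.
Lemma ev_addR m e1 e2 a b c : eval m e1 = Some (VR a) -> eval m e2 = Some (VR b) ->
  a + b = c -> eval m (EBin OAdd e1 e2) = Some (VR c).
Proof. intros H1 H2 H3. simpl. now rewrite H1, H2, H3. Qed.
Lemma ev_subR m e1 e2 a b c : eval m e1 = Some (VR a) -> eval m e2 = Some (VR b) ->
  a - b = c -> eval m (EBin OSub e1 e2) = Some (VR c).
Proof. intros H1 H2 H3. simpl. now rewrite H1, H2, H3. Qed.
Lemma ev_ltN m e1 e2 a b : eval m e1 = Some (VN a) -> eval m e2 = Some (VN b) ->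
  eval m (EBin OLt e1 e2) = Some (b2v (Nat.ltb a b)).
Proof. intros H1 H2. simpl. now rewrite H1, H2. Qed.
Lemma ev_ltR m e1 e2 a b : eval m e1 = Some (VR a) -> eval m e2 = Some (VR b) ->
  eval m (EBin OLt e1 e2) = Some (b2v (if Rlt_dec a b then true else false)).
Proof. intros H1 H2. simpl. now rewrite H1, H2. Qed.
Lemma ev_leR m e1 e2 a b : eval m e1 = Some (VR a) -> eval m e2 = Some (VR b) ->
  eval m (EBin OLe e1 e2) = Some (b2v (if Rle_dec a b then true else false)).
Proof. intros H1 H2. simpl. now rewrite H1, H2. Qed.

Section Layout.
Variable n : nat.
Local Notation W := (n+n+n+n+4)%nat.

Lemma ev_NE m : m 0%nat = VN n -> eval m NE = Some (VN n).
Proof. intros H. unfold NE. simpl. now rewrite H. Qed.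
Lemma ev_WE m : m 0%nat = VN n -> eval m WE = Some (VN W).
Proof. intros H. unfold WE, add, NE. simpl. now rewrite H. Qed.
Lemma ev_VA m k : m 0%nat = VN n -> eval m (VA k) = Some (VN (W + k)).
Proof. intros H. unfold VA, add. simpl. unfold WE, add, NE. simpl. now rewrite H. Qed.
Lemma ev_RV m k v : m 0%nat = VN n -> m (W + k)%nat = v -> eval m (RV k) = Some v.
Proof. intros H H'. unfold RV. eapply ev_load; [apply ev_VA; auto | auto]. Qed.
Lemma ev_EB0 m : m 0%nat = VN n -> eval m EB0 = Some (VN (W+10)).
Proof. intros H. unfold EB0, add. simpl. unfold WE, add, NE. simpl. now rewrite H. Qed.
Lemma ev_EB1 m : m 0%nat = VN n -> eval m EB1 = Some (VN (W+10+(n+1))).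
Proof. intros H. unfold EB1, EB0, add. simpl. unfold WE, add, NE. simpl. now rewrite H. Qed.
Lemma ev_EB2 m : m 0%nat = VN n -> eval m EB2 = Some (VN (W+10+(n+1)+(n+1))).
Proof. intros H. unfold EB2, EB1, EB0, add. simpl. unfold WE, add, NE. simpl. now rewrite H. Qed.
Lemma ev_EB3 m : m 0%nat = VN n -> eval m EB3 = Some (VN (W+10+(n+1)+(n+1)+(n+1))).
Proof. intros H. unfold EB3, EB2, EB1, EB0, add. simpl. unfold WE, add, NE. simpl. now rewrite H. Qed.
Lemma ev_arr m b e i c : eval m b = Some (VN c) -> eval m e = Some (VN i) ->
  eval m (add b e) = Some (VN (c + i)).
Proof. intros H1 H2. unfold add. eapply ev_addN; eauto. Qed.
Lemma ev_IA m r e i : eval m e = Some (VN i) -> eval m (IA r e) = Some (VN (i+i+i+i+r)).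
Proof. intros H. unfold IA, add. simpl. now rewrite H. Qed.
End Layout.

Section Main.
Variables (n : nat) (Qcap : R) (q d0 dback dnext : nat -> R).
Hypothesis Hn : (1 <= n)%nat.
Hypothesis HQ : 0 <= Qcap.
Hypothesis Hq : forall i, (1 <= i <= n)%nat -> 0 <= q i <= Qcap.
Local Notation W := (n+n+n+n+4)%nat.
Local Notation IM := (input_mem n Qcap q d0 dback dnext).

Definition FR (m : mem) := forall a, (a < W)%nat -> m a = IM a.

Lemma div4 i r : (r < 4)%nat -> ((i+i+i+i+r)/4 = i)%nat /\ ((i+i+i+i+r) mod 4 = r)%nat.
Proof.
  intros Hr. replace (i+i+i+i+r)%nat with (r + i*4)%nat by lia. split.
  - rewrite Nat.div_add by lia. rewrite Nat.div_small by lia. lia.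
  - rewrite Nat.Div0.mod_add. apply Nat.mod_small; lia.
Qed.

Lemma IM_in i r : (1 <= i <= n)%nat -> (r < 4)%nat ->
  IM (i+i+i+i+r)%nat = match r with 0%nat => VR (q i) | 1%nat => VR (d0 i) | 2%nat => VR (dback i)
                   | _ => if Nat.ltb i n then VR (dnext i) else VN 0 end.
Proof.
  intros Hi Hr. unfold input_mem. destruct (div4 i r Hr) as [E1 E2].
  assert (A0: Nat.eqb (i+i+i+i+r) 0 = false) by (apply Nat.eqb_neq; lia).
  assert (A1: Nat.eqb (i+i+i+i+r) 1 = false) by (apply Nat.eqb_neq; lia).
  rewrite A0, A1, E1, E2.
  assert (A2: Nat.leb 1 i = true) by (apply Nat.leb_le; lia).
  assert (A3: Nat.leb i n = true) by (apply Nat.leb_le; lia).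
  rewrite A2, A3. simpl. reflexivity.
Qed.

Lemma in_q m i : FR m -> (1 <= i <= n)%nat -> m (i+i+i+i+0)%nat = VR (q i).
Proof. intros F Hi. rewrite F by lia. apply (IM_in i 0); lia. Qed.
Lemma in_d0 m i : FR m -> (1 <= i <= n)%nat -> m (i+i+i+i+1)%nat = VR (d0 i).
Proof. intros F Hi. rewrite F by lia. apply (IM_in i 1); lia. Qed.
Lemma in_dback m i : FR m -> (1 <= i <= n)%nat -> m (i+i+i+i+2)%nat = VR (dback i).
Proof. intros F Hi. rewrite F by lia. apply (IM_in i 2); lia. Qed.
Lemma in_dnext m i : FR m -> (1 <= i < n)%nat -> m (i+i+i+i+3)%nat = VR (dnext i).
Proof. intros F Hi. rewrite F by lia. rewrite (IM_in i 3) by lia.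
  assert (Nat.ltb i n = true) by (apply Nat.ltb_lt; lia). now rewrite H. Qed.
Lemma in_0 m : FR m -> m 0%nat = VN n.
Proof. intros F. rewrite F by lia. reflexivity. Qed.
Lemma in_1 m : FR m -> m 1%nat = VR Qcap.
Proof. intros F. rewrite F by lia. reflexivity. Qed.

Lemma IM_zero a : (W <= a)%nat -> IM a = VN 0.
Proof.
  intros Ha. unfold input_mem.
  assert (A0: Nat.eqb a 0 = false) by (apply Nat.eqb_neq; lia).
  assert (A1: Nat.eqb a 1 = false) by (apply Nat.eqb_neq; lia).
  rewrite A0, A1.
  assert (n + 1 <= a / 4)%nat.
  { replace (n+1)%nat with ((4*(n+1))/4)%nat by (rewrite Nat.mul_comm, Nat.div_mul; lia).
    apply Nat.Div0.div_le_mono. lia. }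
  assert (Nat.leb (a/4) n = false) by (apply Nat.leb_gt; lia).
  rewrite H0. now rewrite Bool.andb_false_r.
Qed.

Lemma Q_mono i k : (i <= k <= n)%nat -> Qcum q i <= Qcum q k.
Proof.
  intros [H1 H2]. induction k.
  - replace i with 0%nat by lia. lra.
  - destruct (Nat.eq_dec i (S k)). subst; lra.
    unfold Qcum in *. simpl. specialize (Hq (S k)). assert (0 <= q (S k)) by (apply Hq; lia).
    assert (psum q i <= psum q k) by (apply IHk; lia). lra.
Qed.

Fixpoint vto (t i : nat) (l : list nat) : Prop :=
  match l with
  | nil => i = t
  | j :: l' => arc n Qcap q i j /\ vto t j l'
  end.

Lemma vf_vto i l : valid_from n Qcap q i l <-> vto n i l.
Proof. revert i. induction l; simpl; intros i. tauto. rewrite IHl. tauto. Qed.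

Lemma vto_le t i l : vto t i l -> (i <= t)%nat.
Proof. revert i. induction l; simpl; intros i H. lia.
  destruct H as [[A _] B]. apply IHl in B. lia. Qed.

Lemma vto_nil_eq t l : vto t t l -> l = nil.
Proof. destruct l; simpl; auto. intros [[A _] B]. apply vto_le in B. lia. Qed.

Notation cost := (cost_from d0 dback dnext).
Notation ac := (arc_cost d0 dback dnext).

Lemma last_arc l : forall s t, vto t s l -> l <> nil ->
  exists i l0, vto i s l0 /\ arc n Qcap q i t /\ cost s l = cost s l0 + ac i t.
Proof.
  induction l as [|a l IH]; intros s t H Hne. congruence.
  destruct l as [|b l'].
  - simpl in H. destruct H as [A B]. subst. exists s, nil. simpl. split; auto. split; auto. lra.
  - simpl in H. destruct H as [A B].
    destruct (IH a t B) as [i [l0 [C [D E]]]]. discriminate.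
    exists i, (a :: l0). simpl. split; auto. split; auto.
    simpl in E. rewrite E. lra.
Qed.

Lemma vto_app t i l x : vto t i l -> arc n Qcap q t x -> vto x i (l ++ x :: nil).
Proof. revert i. induction l; simpl; intros i H Ha. subst. auto. destruct H. split; auto. Qed.

Lemma cost_app t i l x : vto t i l -> cost i (l ++ x :: nil) = cost i l + ac t x.
Proof. revert i. induction l; simpl; intros i H. subst. lra. destruct H. rewrite (IHl a); auto. lra. Qed.


Ltac mbase :=
  first [ reflexivity | eassumption
        | (eapply in_0; eassumption)
        | (eapply in_1; eassumption)
        | (eapply in_q; [eassumption| lia])
        | (eapply in_d0; [eassumption| lia])
        | (eapply in_dback; [eassumption| lia])
        | (eapply in_dnext; [eassumption| lia])
        | match goal with H : forall _, _ |- _ => solve [eapply H; lia] end ].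
Ltac mrw := repeat (match goal with x := _ : mem |- _ => subst x end);
  repeat (first [rewrite upd_eq by lia | rewrite upd_neq by lia]).
Ltac msolve := mrw; mbase.

Ltac ev :=
  lazymatch goal with
  | |- eval _ (ENat _) = _ => reflexivity
  | |- eval _ (EReal _) = _ => reflexivity
  | |- eval _ NE = _ => apply (ev_NE n)
  | |- eval _ (VA _) = _ => apply (ev_VA n)
  | |- eval _ (RV _) = _ => eapply (ev_RV n)
  | |- eval _ (add EB0 _) = _ => eapply ev_arr; [apply (ev_EB0 n) | ev]
  | |- eval _ (add EB1 _) = _ => eapply ev_arr; [apply (ev_EB1 n) | ev]
  | |- eval _ (add EB2 _) = _ => eapply ev_arr; [apply (ev_EB2 n) | ev]
  | |- eval _ (add EB3 _) = _ => eapply ev_arr; [apply (ev_EB3 n) | ev]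
  | |- eval _ (IA _ _) = _ => eapply ev_IA; ev
  | |- eval _ (ELoad _) = _ => eapply ev_load; [ev | ]
  | |- eval _ (add _ _) = _ => eapply ev_addN; [ev | ev | ]
  | |- eval _ (EBin OAdd _ _) = Some (VR _) => eapply ev_addR; [ev | ev | ]
  | |- eval _ (EBin OSub _ _) = Some (VR _) => eapply ev_subR; [ev | ev | ]
  | |- eval _ (EBin OSub _ _) = Some (VN _) => eapply ev_subN; [ev | ev | ]
  end.
Ltac evs := ev; try (unfold FR in *); try (match goal with |- _ => idtac end).

Lemma FL_cond m h Qj (D : nat -> nat) :
  m 0%nat = VN n -> m 1%nat = VR Qcap -> m (W+4)%nat = VR Qj -> m (W+1)%nat = VN h ->
  m (W+10+(n+1)+(n+1)+(n+1) + h)%nat = VN (D h) -> m (W+10 + D h)%nat = VR (Qcum q (D h)) ->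
  eval m (EBin OLt (ELoad (ENat 1)) (EBin OSub (RV 4) (ELoad (add EB0 (ELoad (add EB3 (RV 1)))))))
  = Some (b2v (if Rlt_dec Qcap (Qj - Qcum q (D h)) then true else false)).
Proof.
  intros. eapply ev_ltR; ev; msolve.
Qed.

Lemma FL_spec k : forall m h tl (D : nat -> nat) Qj,
  m 0%nat = VN n -> m 1%nat = VR Qcap -> m (W+4)%nat = VR Qj -> m (W+1)%nat = VN h ->
  (forall x, (h <= x < tl)%nat -> m (W+10+(n+1)+(n+1)+(n+1) + x)%nat = VN (D x)) ->
  (forall x, (h <= x < tl)%nat -> (D x <= n)%nat) ->
  (forall x, (h <= x < tl)%nat -> m (W+10 + D x)%nat = VR (Qcum q (D x))) ->
  (tl <= n+1)%nat -> (h + k < tl)%nat -> Qj - Qcum q (D (h+k)%nat) <= Qcap ->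
  exists h', (h <= h' <= h+k)%nat /\ exec FLOOP m (2*(h'-h)+1) (upd m (W+1) (VN h')) /\
    (forall x, (h <= x < h')%nat -> Qcap < Qj - Qcum q (D x)) /\ Qj - Qcum q (D h') <= Qcap.
Proof.
  induction k; intros m h tl D Qj M0 M1 M4 MH MD DB MQ Htl Hk Hstop.
  - exists h. split. lia. rewrite Nat.add_0_r in Hstop. split.
    + replace (2 * (h-h) + 1)%nat with 1%nat by lia. rewrite <- MH, upd_same.
      apply ExWhileF. erewrite (FL_cond m h Qj D); eauto.
      destruct (Rlt_dec Qcap (Qj - Qcum q (D h))). lra. reflexivity.
      apply MD; lia. apply MQ; lia.
    + split. intros; lia. auto.
  - destruct (Rlt_dec Qcap (Qj - Qcum q (D h))) as [Hlt|Hge].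
    + set (m1 := upd m (W+1)%nat (VN (h+1))).
      destruct (IHk m1 (h+1)%nat tl D Qj) as [h' [C1 [C2 [C3 C4]]]];
        try (unfold m1; intros; msolve); try lia.
      replace (h+1+k)%nat with (h + S k)%nat by lia. auto.
      exists h'. split. lia. split.
      * replace (2 * (h'-h) + 1)%nat with (S (1 + (2 * (h'-(h+1)) + 1)))%nat by lia.
        eapply ExWhileT.
        { erewrite (FL_cond m h Qj D); eauto. 
          destruct (Rlt_dec Qcap (Qj - Qcum q (D h))). reflexivity. lra.
          apply MD; lia. apply MQ; lia. }
        { apply ExStore. ev. all: try msolve. ev. all: try msolve. }
        unfold m1 in C2. rewrite upd_upd in C2. exact C2.
      * split; auto. intros x Hx. destruct (Nat.eq_dec x h). subst; auto. apply C3; lia.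
    + exists h. split. lia. split.
      * replace (2 * (h-h) + 1)%nat with 1%nat by lia. rewrite <- MH, upd_same.
        apply ExWhileF. erewrite (FL_cond m h Qj D); eauto.
        destruct (Rlt_dec Qcap (Qj - Qcum q (D h))). lra. reflexivity.
        apply MD; lia. apply MQ; lia.
      * split. intros; lia. lra.
Qed.

Lemma BL_spec k : forall m tl (D : nat -> nat) (vf : nat -> R) j h vj,
  m 0%nat = VN n -> m (W+0)%nat = VN j -> m (W+6)%nat = VN h -> m (W+2)%nat = VN tl ->
  tl = (h + k)%nat ->
  m (W+10+(n+1) + j)%nat = VR vj ->
  (forall x, (h <= x < tl)%nat -> m (W+10+(n+1)+(n+1)+(n+1) + x)%nat = VN (D x)) ->
  (forall x, (h <= x < tl)%nat -> m (W+10+(n+1) + D x)%nat = VR (vf (D x))) ->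
  exists tl' hx t, (h <= tl' <= tl)%nat /\
    exec BLOOP m t (upd (upd m (W+2) (VN tl')) (W+6) (VN hx)) /\
    (t <= 3 * (tl - tl') + 4)%nat /\
    (forall x, (tl' <= x < tl)%nat -> vj <= vf (D x)) /\
    ((h < tl')%nat -> vf (D (tl'-1)%nat) < vj).
Proof.
  induction k; intros m tl D vf j h vj M0 MJ M6 M2 Htl MV MD MVD.
  - exists tl, h, 1%nat. split. lia. split.
    + rewrite <- M6. rewrite <- M2, !upd_same. apply ExWhileF.
      erewrite ev_ltN. 2: ev; msolve. 2: ev; msolve.
      assert (Nat.ltb h tl = false) by (apply Nat.ltb_ge; lia). now rewrite H.
    + split. lia. split. intros; lia. intros; lia.
  - assert (Hc : eval m (EBin OLe (ELoad (add EB1 (RV 0)))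
                   (ELoad (add EB1 (ELoad (add EB3 (EBin OSub (RV 2) (ENat 1)))))))
                 = Some (b2v (if Rle_dec vj (vf (D (tl-1)%nat)) then true else false))).
    { eapply ev_leR; ev; try msolve. }
    assert (Hw : eval m (EBin OLt (RV 6) (RV 2)) = Some (VN 1)).
    { erewrite ev_ltN. 2: ev; msolve. 2: ev; msolve.
      assert (Nat.ltb h tl = true) by (apply Nat.ltb_lt; lia). now rewrite H. }
    destruct (Rle_dec vj (vf (D (tl-1)%nat))) as [Hle|Hgt].
    + set (m1 := upd m (W+2)%nat (VN (tl-1))).
      destruct (IHk m1 (tl-1)%nat D vf j h vj) as [tl' [hx [t [C1 [C2 [C3 [C4 C5]]]]]]];
        try (unfold m1; intros; msolve); try lia.
      exists tl', hx, (S (S 1 + t)). split. lia. split.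
      * eapply ExWhileT with (m1 := m1). exact Hw.
        { apply ExIfT with (k := 0%nat). exact Hc. unfold m1.
          apply ExStore. ev; msolve. ev; try msolve. }
        unfold m1 in C2. rewrite upd_upd in C2. exact C2.
      * split. lia. split; auto. intros x Hx. destruct (Nat.eq_dec x (tl-1)). subst; auto.
        apply C4; lia.
    + exists tl, tl, (S (S 1 + 1)). split. lia. split.
      * rewrite <- M2 at 1. rewrite upd_same.
        eapply ExWhileT with (m1 := upd m (W+6)%nat (VN tl)). exact Hw.
        { apply ExIfF. exact Hc. apply ExStore. ev; msolve. ev; msolve. }
        apply ExWhileF. rewrite (ev_ltN _ _ _ tl tl). now rewrite Nat.ltb_irrefl.
        ev; msolve. ev; msolve.
      * split. lia. split. intros; lia. intros; lra.
Qed.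

Definition vv (pp : nat -> R) i := pp i + d0 (i+1)%nat - Dcum dnext (i+1)%nat.

Definition MI j h tl (D : nat -> nat) (pp : nat -> R) (pr : nat -> nat) (m : mem) : Prop :=
 (1 <= j <= n+1)%nat /\ FR m /\ m (W+0)%nat = VN j /\ m (W+1)%nat = VN h /\ m (W+2)%nat = VN tl /\
 (h <= tl <= j)%nat /\
 (forall x, (h <= x < tl)%nat -> m (W+10+(n+1)+(n+1)+(n+1) + x)%nat = VN (D x)) /\
 ((j <= n)%nat -> m (W+3)%nat = VR (Dcum dnext j)) /\
 m (W+4)%nat = VR (Qcum q (j-1)) /\
 ((2 <= j)%nat -> m (W+5)%nat = VR (pp (j-1)%nat)) /\
 (forall i, (i < j)%nat -> m (W+10 + i)%nat = VR (Qcum q i)) /\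
 (forall i, (i < j)%nat -> (i < n)%nat -> m (W+10+(n+1) + i)%nat = VR (vv pp i)) /\
 (forall i, (i < j)%nat -> m (W+10+(n+1)+(n+1) + i)%nat = VN (pr i)) /\
 pp 0%nat = 0 /\ pr 0%nat = 0%nat /\
 (forall i, (1 <= i < j)%nat -> (pr i < i)%nat /\ arc n Qcap q (pr i) i /\ pp i = pp (pr i) + ac (pr i) i) /\
 (forall i l, (i < j)%nat -> vto i 0 l -> pp i <= cost 0 l) /\
 (forall x, (h <= x < tl)%nat -> (D x < j)%nat) /\
 (forall x y, (h <= x <= y)%nat -> (y < tl)%nat -> vv pp (D x) <= vv pp (D y)) /\
 (forall i, (i < j)%nat -> (i < n)%nat -> Qcum q (j-1) - Qcum q i <= Qcap ->
    exists x, (h <= x < tl)%nat /\ (i <= D x)%nat /\ vv pp (D x) <= vv pp i).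

Lemma vv_upd pp j P i : i <> j -> vv (fun k => if Nat.eqb k j then P else pp k) i = vv pp i.
Proof. intros H. unfold vv. apply Nat.eqb_neq in H. now rewrite H. Qed.

Lemma Qcum_S j : (1 <= j)%nat -> Qcum q (j-1) + q j = Qcum q j.
Proof. intros H. destruct j. lia. unfold Qcum. simpl. now rewrite Nat.sub_0_r. Qed.
Lemma Dcum_S j : (1 <= j)%nat -> Dcum dnext j + dnext j = Dcum dnext (j+1).
Proof. intros H. unfold Dcum. destruct j. lia. replace (S j + 1 - 1)%nat with (S j) by lia.
  simpl. now rewrite Nat.sub_0_r. Qed.

Lemma step j h tl D pp pr m : MI j h tl D pp pr m -> (j <= n)%nat ->
  exists t h' tl' D' pp' pr' m', exec BODY m t m' /\ MI (j+1) h' tl' D' pp' pr' m' /\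
    (t + 3*(tl' - h') <= 19 + 3*(tl - h))%nat.
Proof.
  intros (Hj & F & MJ & MH & MT & Hhtl & MD & MDJ & MQJ & MP & MQC & MV & MPR & pp0 & pr0 &
          SPR & SOPT & DJ & SS & INV) Hjn.
  assert (M0 : m 0%nat = VN n) by (apply in_0; auto).
  assert (M1 : m 1%nat = VR Qcap) by (apply in_1; auto).
  set (Qj := Qcum q j).
  set (m1 := upd m (W+4)%nat (VR Qj)).
  set (m2 := upd m1 (W+10+j)%nat (VR Qj)).
  destruct (INV (j-1)%nat) as [x0 [Hx0 [Hx0' _]]]; try lia. rewrite Rminus_diag. lra.
  assert (Dx0 : D x0 = (j-1)%nat) by (specialize (DJ x0 Hx0); lia).
  destruct (FL_spec (x0 - h) m2 h tl D Qj) as [h' [Hh' [EF [FP FS]]]];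
    try (unfold m2, m1; intros; msolve).
  { intros x Hx. specialize (DJ x Hx). lia. }
  { intros x Hx. specialize (DJ x Hx). unfold m2, m1. msolve. }
  lia. lia.
  { replace (h + (x0 - h))%nat with x0 by lia. rewrite Dx0. unfold Qj.
    rewrite <- (Qcum_S j) by lia. specialize (Hq j). assert (q j <= Qcap) by (apply Hq; lia). lra. }
  assert (Hh'tl : (h' < tl)%nat) by lia.
  assert (Hfj : (D h' < j)%nat) by (apply DJ; lia).
  assert (INV1 : forall i, (i < j)%nat -> (i < n)%nat -> Qj - Qcum q i <= Qcap ->
            exists x, (h' <= x < tl)%nat /\ (i <= D x)%nat /\ vv pp (D x) <= vv pp i).
  { intros i Hi Hin Ha. destruct (INV i Hi Hin) as [x [Hx [Hix Hv]]].
    assert (Qcum q (j-1) <= Qj) by (apply Q_mono; lia). lra.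
    exists x. split; auto. destruct (Nat.lt_ge_cases x h'); [|lia].
    exfalso. specialize (FP x ltac:(lia)). assert (Qcum q i <= Qcum q (D x)).
    { apply Q_mono. specialize (DJ x Hx). lia. } lra. }
  set (Pj := vv pp (D h') + Dcum dnext j + dback j).
  assert (PRj : arc n Qcap q (D h') j /\ Pj = pp (D h') + ac (D h') j).
  { split. split. auto. split. auto. auto. unfold Pj, vv, arc_cost. lra. }
  assert (OPT : forall l, vto j 0 l -> Pj <= cost 0 l).
  { intros l Hl. destruct l as [|a l']. simpl in Hl. lia.
    destruct (last_arc (a :: l') 0 j Hl ltac:(discriminate)) as [i0 [l0 [A [B C]]]].
    rewrite C. destruct B as [B1 [B2 B3]].
    assert (pp i0 <= cost 0 l0) by (apply (SOPT i0 l0); auto).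
    destruct (INV1 i0 B1 ltac:(lia) B3) as [x [Hx [_ Hv]]].
    assert (vv pp (D h') <= vv pp (D x)) by (apply SS; lia).
    unfold Pj, arc_cost. unfold vv in *. lra. }
  set (m3 := upd m2 (W+1)%nat (VN h')).
  set (m4 := upd m3 (W+5)%nat (VR Pj)).
  set (m5 := upd m4 (W+10+(n+1)+(n+1)+j)%nat (VN (D h'))).
  set (pp' := fun k => if Nat.eqb k j then Pj else pp k).
  set (pr' := fun k => if Nat.eqb k j then D h' else pr k).
  assert (Hfn : (D h' < n)%nat) by lia.
  assert (E5 : forall rest t' m', exec rest m5 t' m' ->
     exec (SSeq (SStore (VA 4) (EBin OAdd (RV 4) (ELoad (IA 0 (RV 0)))))
   (SSeq (SStore (add EB0 (RV 0)) (RV 4))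
   (SSeq FLOOP
   (SSeq (SStore (VA 5) (EBin OAdd (EBin OAdd (ELoad (add EB1 (ELoad (add EB3 (RV 1))))) (RV 3))
                          (ELoad (IA 2 (RV 0)))))
   (SSeq (SStore (add EB2 (RV 0)) (ELoad (add EB3 (RV 1)))) rest))))) m (1 + (1 + (2*(h'-h)+1 + (1 + (1 + t')))))%nat m').
  { intros rest t' m' Hr.
    apply ExSeq with (m1 := m1).
    { apply ExStore. ev; msolve. ev; try msolve. apply Qcum_S; lia. }
    apply ExSeq with (m1 := m2).
    { apply ExStore. ev; msolve. ev; msolve. }
    apply ExSeq with (m1 := m3). exact EF.
    apply ExSeq with (m1 := m4).
    { apply ExStore. ev; msolve. ev; try msolve. }
    apply ExSeq with (m1 := m5). 
    apply ExStore. ev; msolve. ev; msolve. exact Hr. }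
  assert (Hvf : forall x, (h' <= x < tl)%nat -> (D x < j)%nat) by (intros; apply DJ; lia).
  destruct (Nat.lt_ge_cases j n) as [Hjn'|Hjn'].
  -
    set (vj := Pj + d0 (j+1)%nat - Dcum dnext (j+1)).
    set (m6 := upd m5 (W+3)%nat (VR (Dcum dnext (j+1)))).
    set (m7 := upd m6 (W+10+(n+1)+j)%nat (VR vj)).
    set (m8 := upd m7 (W+6)%nat (VN h')).
    destruct (BL_spec (tl - h') m8 tl D (vv pp) j h' vj) as [tl' [hx [tb [T1 [T2 [T3 [T4 T5]]]]]]];
      try (intros; msolve); try lia.
    { intros x Hx. specialize (Hvf x Hx). msolve. }
    set (m9 := upd (upd m8 (W+2)%nat (VN tl')) (W+6)%nat (VN hx)).
    set (m10 := upd m9 (W+10+(n+1)+(n+1)+(n+1)+tl')%nat (VN j)).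
    set (m11 := upd m10 (W+2)%nat (VN (tl'+1))).
    set (m12 := upd m11 (W+0)%nat (VN (j+1))).
    exists (1 + (1 + (2*(h'-h)+1 + (1 + (1 + (S (1 + (1 + (1 + (tb + (1 + 1))))) + 1))))))%nat,
      h', (tl'+1)%nat, (fun x => if Nat.eqb x tl' then j else D x),
      (fun k => if Nat.eqb k j then Pj else pp k), (fun k => if Nat.eqb k j then D h' else pr k), m12.
    split; [|split].
    + apply E5. apply ExSeq with (m1 := m11).
      * eapply ExIfT with (k := 0%nat).
        { erewrite ev_ltN. 2: ev; msolve. 2: ev; msolve.
          assert (Nat.ltb j n = true) by (apply Nat.ltb_lt; lia). now rewrite H. }
        apply ExSeq with (m1 := m6).
        { apply ExStore. ev; msolve. ev; try msolve. apply Dcum_S; lia. }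
        apply ExSeq with (m1 := m7).
        { apply ExStore. ev; msolve. ev; try msolve. }
        apply ExSeq with (m1 := m8).
        { apply ExStore. ev; msolve. ev; msolve. }
        apply ExSeq with (m1 := m9). exact T2.
        apply ExSeq with (m1 := m10).
        { apply ExStore. ev; msolve. ev; msolve. }
        apply ExStore. ev; msolve. ev; msolve.
      * apply ExStore. ev; msolve. ev; msolve.
    + unfold MI.
      split. lia. split. { unfold FR. intros a Ha. mrw. apply F; lia. }
      split. msolve. split. msolve. split. msolve. split. lia.
      split. { intros x Hx. destruct (Nat.eqb_spec x tl'). subst; msolve. msolve. }
      split. { intros. msolve. }
      split. { replace (j+1-1)%nat with j by lia. msolve. }
      split. { intros. replace (j+1-1)%nat with j by lia. rewrite Nat.eqb_refl. msolve. }
      split. { intros i Hi. destruct (Nat.eq_dec i j). subst. msolve. msolve. }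
      split. { intros i Hi Hin. destruct (Nat.eq_dec i j). subst. mrw. unfold vv at 1.
               rewrite Nat.eqb_refl. reflexivity. rewrite vv_upd by auto. msolve. }
      split. { intros i Hi. destruct (Nat.eqb_spec i j). subst. msolve. msolve. }
      split. { destruct (Nat.eqb_spec 0 j). lia. auto. }
      split. { destruct (Nat.eqb_spec 0 j). lia. auto. }
      split. { intros i Hi. destruct (Nat.eqb_spec i j).
               - subst. rewrite (proj2 (Nat.eqb_neq (D h') j)) by lia. split. lia. split.
                 apply PRj. apply PRj.
               - destruct (SPR i ltac:(lia)) as [A [B C]].
                 rewrite (proj2 (Nat.eqb_neq (pr i) j)) by lia. auto. }
      split. { intros i l Hi Hl. destruct (Nat.eqb_spec i j). subst. auto. apply SOPT; auto. lia. }
      split. { intros x Hx. destruct (Nat.eqb_spec x tl'). lia. specialize (Hvf x ltac:(lia)). lia. }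
      split. { intros x y Hxy Hy.
               destruct (Nat.eqb_spec y tl'); destruct (Nat.eqb_spec x tl').
               - lra.
               - rewrite vv_upd by (specialize (Hvf x ltac:(lia)); lia).
                 unfold vv at 2. rewrite Nat.eqb_refl. fold vj.
                 assert (vv pp (D x) <= vv pp (D (tl'-1)%nat)) by (apply SS; lia).
                 assert (vv pp (D (tl' - 1)%nat) < vj) by (apply T5; lia). lra.
               - lia.
               - pose proof (Hvf x ltac:(lia)). pose proof (Hvf y ltac:(lia)).
                 rewrite !vv_upd by lia.
                 apply SS; lia. }
      { intros i Hi Hin Ha. replace (j+1-1)%nat with j in Ha by lia.
        destruct (Nat.eq_dec i j).
        - subst. exists tl'. rewrite Nat.eqb_refl. split. lia. split. lia. lra.
        - destruct (INV1 i ltac:(lia) Hin Ha) as [x [Hx [Hix Hv]]].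
          destruct (Nat.lt_ge_cases x tl').
          + exists x. rewrite (proj2 (Nat.eqb_neq x tl')) by lia. split. lia. split. auto.
            pose proof (Hvf x ltac:(lia)). rewrite !vv_upd by lia. auto.
          + exists tl'. rewrite Nat.eqb_refl. split. lia. split. lia.
            rewrite (vv_upd pp j Pj i) by lia. unfold vv at 1. rewrite Nat.eqb_refl. fold vj.
            assert (vj <= vv pp (D x)) by (apply T4; lia). lra. }
    + lia.
  -
    assert (j = n) by lia. subst j.
    set (m12 := upd m5 (W+0)%nat (VN (n+1))).
    exists (1 + (1 + (2*(h'-h)+1 + (1 + (1 + (S 0 + 1))))))%nat,
      h', tl, D,
      (fun k => if Nat.eqb k n then Pj else pp k), (fun k => if Nat.eqb k n then D h' else pr k), m12.
    split; [|split].
    + apply E5. apply ExSeq with (m1 := m5).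
      * apply ExIfF.
        { erewrite ev_ltN. 2: ev; msolve. 2: ev; msolve. now rewrite Nat.ltb_irrefl. }
        apply ExSkip.
      * apply ExStore. ev; msolve. ev; msolve.
    + unfold MI.
      split. lia. split. { unfold FR. intros a Ha. mrw. apply F; lia. }
      split. msolve. split. msolve. split. msolve. split. lia.
      split. { intros x Hx. msolve. }
      split. { intros. lia. }
      split. { replace (n+1-1)%nat with n by lia. msolve. }
      split. { intros. replace (n+1-1)%nat with n by lia. rewrite Nat.eqb_refl. msolve. }
      split. { intros i Hi. destruct (Nat.eq_dec i n). subst. msolve. msolve. }
      split. { intros i Hi Hin. rewrite vv_upd by lia. msolve. }
      split. { intros i Hi. destruct (Nat.eqb_spec i n). subst. msolve. msolve. }
      split. { destruct (Nat.eqb_spec 0 n). lia. auto. }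
      split. { destruct (Nat.eqb_spec 0 n). lia. auto. }
      split. { intros i Hi. destruct (Nat.eqb_spec i n).
               - subst. rewrite (proj2 (Nat.eqb_neq (D h') n)) by lia. split. lia. split.
                 apply PRj. apply PRj.
               - destruct (SPR i ltac:(lia)) as [A [B C]].
                 rewrite (proj2 (Nat.eqb_neq (pr i) n)) by lia. auto. }
      split. { intros i l Hi Hl. destruct (Nat.eqb_spec i n). subst. auto. apply SOPT; auto. lia. }
      split. { intros x Hx. specialize (Hvf x ltac:(lia)). lia. }
      split. { intros x y Hxy Hy.
               pose proof (Hvf x ltac:(lia)). pose proof (Hvf y ltac:(lia)).
               rewrite !vv_upd by lia. apply SS; lia. }
      { intros i Hi Hin Ha. replace (n+1-1)%nat with n in Ha by lia.
        destruct (INV1 i ltac:(lia) Hin Ha) as [x [Hx [Hix Hv]]].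
        exists x. split. lia. split. auto.
        pose proof (Hvf x ltac:(lia)). rewrite !vv_upd by lia. auto. }
    + lia.
Qed.

Lemma main_loop k : forall j h tl D pp pr m, MI j h tl D pp pr m -> (n + 1 - j = k)%nat ->
  exists t h' tl' D' pp' pr' m', exec MAIN m t m' /\ MI (n+1) h' tl' D' pp' pr' m' /\
    (t <= 20 * (n + 1 - j) + 3 * (tl - h) + 1)%nat.
Proof.
  induction k; intros j h tl D pp pr m HM Hk.
  - assert (j = n + 1)%nat by (destruct HM; lia). subst j.
    exists 1%nat, h, tl, D, pp, pr, m. split; [|split]; auto; [|lia].
    apply ExWhileF. destruct HM as (_ & F & MJ & _).
    assert (m 0%nat = VN n) by (apply in_0; auto).
    erewrite ev_ltN. 2: ev; msolve. 2: ev; msolve. now rewrite Nat.ltb_irrefl.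
  - assert (Hj : (j <= n)%nat) by lia.
    destruct (step j h tl D pp pr m HM Hj) as (t1 & h1 & tl1 & D1 & pp1 & pr1 & m1 & E1 & M1 & T1).
    destruct (IHk (j+1)%nat h1 tl1 D1 pp1 pr1 m1 M1 ltac:(lia)) as (t2 & h2 & tl2 & D2 & pp2 & pr2 & m2 & E2 & M2 & T2).
    exists (S (t1 + t2)), h2, tl2, D2, pp2, pr2, m2. split; [|split]; auto; [|lia].
    eapply ExWhileT; eauto.
    destruct HM as (_ & F & MJ & _).
    assert (m 0%nat = VN n) by (apply in_0; auto).
    erewrite ev_ltN. 2: ev; msolve. 2: ev; msolve.
    assert (Nat.ltb j (n+1) = true) by (apply Nat.ltb_lt; lia). now rewrite H0.
Qed.

Lemma init_ok : exists m, exec INIT IM 6 m /\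
  MI 1 0 1 (fun _ => 0%nat) (fun _ => 0) (fun _ => 0%nat) m.
Proof.
  assert (F : FR IM) by (intros a _; reflexivity).
  assert (M0 : IM 0%nat = VN n) by reflexivity.
  set (m1 := upd IM (W+0)%nat (VN 1)).
  set (m2 := upd m1 (W+2)%nat (VN 1)).
  set (m3 := upd m2 (W+3)%nat (VR 0)).
  set (m4 := upd m3 (W+4)%nat (VR 0)).
  set (m5 := upd m4 (W+10+0)%nat (VR 0)).
  set (m6 := upd m5 (W+10+(n+1)+0)%nat (VR (d0 1%nat))).
  exists m6. split.
  - change 6%nat with (1 + (1 + (1 + (1 + (1 + 1)))))%nat.
    apply ExSeq with (m1 := m1). apply ExStore. ev; msolve. ev.
    apply ExSeq with (m1 := m2). apply ExStore. ev; msolve. ev.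
    apply ExSeq with (m1 := m3). apply ExStore. ev; msolve. ev.
    apply ExSeq with (m1 := m4). apply ExStore. ev; msolve. ev.
    apply ExSeq with (m1 := m5). apply ExStore. ev; msolve. ev.
    apply ExStore. ev; msolve. ev; msolve.
  - unfold MI.
    split. lia. split. { unfold FR. intros a Ha. mrw. reflexivity. }
    split. msolve. split. { mrw. apply IM_zero. lia. } split. msolve. split. lia.
    split. { intros x Hx. replace x with 0%nat by lia. mrw. apply IM_zero. lia. }
    split. { intros. msolve. }
    split. { msolve. }
    split. { intros. lia. }
    split. { intros i Hi. replace i with 0%nat by lia. msolve. }
    split. { intros i Hi Hin. replace i with 0%nat by lia. mrw. f_equal. unfold vv, Dcum. simpl. lra. }
    split. { intros i Hi. replace i with 0%nat by lia. mrw. apply IM_zero. lia. }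
    split. reflexivity. split. reflexivity.
    split. { intros. lia. }
    split. { intros i l Hi Hl. replace i with 0%nat in * by lia. apply vto_nil_eq in Hl. subst. simpl. lra. }
    split. { intros. lia. }
    split. { intros. lra. }
    { intros i Hi Hin Ha. exists 0%nat. split. lia. split. lia. replace i with 0%nat by lia. lra. }
Qed.

Fixpoint pchain (pr : nat -> nat) (f x : nat) : list nat :=
  match f with
  | O => x :: nil
  | S f' => if Nat.eqb x 0 then 0%nat :: nil else pchain pr f' (pr x) ++ x :: nil
  end.

Section Chain.
Variable pr : nat -> nat.
Hypothesis Hpr : forall i, (1 <= i <= n)%nat -> (pr i < i)%nat.

Lemma pchain_stable f : forall x, (x <= f)%nat -> (x <= n)%nat -> pchain pr (S f) x = pchain pr f x.
Proof.
  induction f; intros x Hx Hxn.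
  - replace x with 0%nat by lia. reflexivity.
  - simpl. destruct (Nat.eqb_spec x 0). reflexivity.
    specialize (Hpr x). simpl in IHf. rewrite IHf by lia. reflexivity.
Qed.

Definition chain x := pchain pr n x.

Lemma chain0 : chain 0 = 0%nat :: nil.
Proof. unfold chain. destruct (Nat.eq_dec n 0). lia.
  replace n with (S (n-1)) by lia. reflexivity. Qed.

Lemma chain_step x : (1 <= x <= n)%nat -> chain x = chain (pr x) ++ x :: nil.
Proof.
  intros Hx. unfold chain. assert (pr x < x)%nat by (apply Hpr; lia).
  replace n with (S (n-1)) at 1 by lia. simpl.
  destruct (Nat.eqb_spec x 0). lia. f_equal.
  replace n with (S (n-1)) at 2 by lia. symmetry. apply pchain_stable; lia.
Qed.

Lemma chain_len x : (x <= n)%nat -> (length (chain x) <= x + 1)%nat.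
Proof.
  induction x as [x IH] using (well_founded_induction lt_wf). intros Hx.
  destruct (Nat.eq_dec x 0). subst. rewrite chain0. simpl. lia.
  rewrite chain_step by lia. rewrite length_app. simpl.
  assert (pr x < x)%nat by (apply Hpr; lia). specialize (IH (pr x) H ltac:(lia)). lia.
Qed.

Lemma upd4 (m : mem) a b u v w z : a <> b -> upd (upd (upd (upd m a u) b v) a w) b z = upd (upd m a w) b z.
Proof. intros H. apply functional_extensionality; intro y. unfold upd.
  destruct (Nat.eqb_spec y b); destruct (Nat.eqb_spec y a); auto. Qed.

Lemma loop1_ok x : (x <= n)%nat -> forall m k,
  m 0%nat = VN n -> m (W+7)%nat = VN x -> m (W+8)%nat = VN k ->
  (forall i, (i <= n)%nat -> m (W+10+(n+1)+(n+1) + i)%nat = VN (pr i)) ->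
  exists t, exec LOOP1 m t (upd (upd m (W+7)%nat (VN 0)) (W+8)%nat (VN (k + length (chain x) - 1)))
    /\ (t <= 3 * length (chain x))%nat.
Proof.
  induction x as [x IH] using (well_founded_induction lt_wf). intros Hx m k M0 MX MK MPR.
  destruct (Nat.eq_dec x 0).
  - subst. rewrite chain0. simpl. exists 1%nat. split; [|lia].
    replace (k + 1 - 1)%nat with k by lia. rewrite <- MX, <- MK, !upd_same.
    apply ExWhileF. erewrite ev_ltN. 2: ev. 2: ev; msolve. reflexivity.
  - assert (Hp : (pr x < x)%nat) by (apply Hpr; lia).
    set (m1 := upd (upd m (W+7)%nat (VN (pr x))) (W+8)%nat (VN (k+1))).
    destruct (IH (pr x) Hp ltac:(lia) m1 (k+1)%nat) as [t [E T]]; try (intros; msolve).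
    rewrite chain_step by lia. rewrite length_app. simpl.
    exists (S (1 + 1 + t)). split.
    + eapply ExWhileT with (m1 := m1).
      { erewrite ev_ltN. 2: ev. 2: ev; msolve.
        assert (Nat.ltb 0 x = true) by (apply Nat.ltb_lt; lia). now rewrite H. }
      { apply ExSeq with (m1 := upd m (W+7)%nat (VN (pr x))).
        apply ExStore. ev; msolve. ev; msolve. apply ExStore. ev; msolve. ev; try msolve. }
      unfold m1 in E. rewrite upd4 in E by lia.
      replace (k + (length (chain (pr x)) + 1) - 1)%nat with (k + 1 + length (chain (pr x)) - 1)%nat by lia.
      exact E.
    + lia.
Qed.

Lemma loop2_ok x : (x <= n)%nat -> forall m pos,
  m 0%nat = VN n -> m (W+7)%nat = VN x -> m (W+9)%nat = VN pos ->
  pos = (length (chain x) + 1)%nat -> pr 0 = 0%nat ->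
  (forall i, (i <= n)%nat -> m (W+10+(n+1)+(n+1) + i)%nat = VN (pr i)) ->
  exists t m', exec LOOP2 m t m' /\ (t <= 4 * pos)%nat /\
    (forall s, (2 <= s <= pos)%nat -> m' s = VN (nth (s-2) (chain x) 0%nat)) /\
    (forall a, (a < 2 \/ pos < a)%nat -> a <> (W+7)%nat -> a <> (W+9)%nat -> m' a = m a).
Proof.
  induction x as [x IH] using (well_founded_induction lt_wf). intros Hx m pos M0 MX MP Hpos pr0 MPR.
  assert (Hlen := chain_len x Hx). assert (Hposn : (pos <= n + 2)%nat) by lia.
  set (m1 := upd m pos (VN x)).
  set (m2 := upd m1 (W+7)%nat (VN (pr x))).
  set (m3 := upd m2 (W+9)%nat (VN (pos-1))).
  assert (Hw : eval m (EBin OLt (ENat 1) (RV 9)) = Some (VN 1)).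
  { destruct x. rewrite chain0 in Hpos. simpl in Hpos.
    erewrite ev_ltN. 2: ev. 2: ev; msolve. subst pos. reflexivity.
    rewrite chain_step in Hpos by lia. rewrite length_app in Hpos. simpl in Hpos.
    erewrite ev_ltN. 2: ev. 2: ev; msolve. assert (Nat.ltb 1 pos = true) by (apply Nat.ltb_lt; lia).
    now rewrite H. }
  assert (Eb : exec (SSeq (SStore (RV 9) (RV 7))
     (SSeq (SStore (VA 7) (ELoad (add EB2 (RV 7)))) (SStore (VA 9) (EBin OSub (RV 9) (ENat 1))))) m (1 + (1 + 1)) m3).
  { apply ExSeq with (m1 := m1). apply ExStore. ev; msolve. ev; msolve.
    apply ExSeq with (m1 := m2). apply ExStore. ev; msolve. ev; msolve.
    apply ExStore. ev; msolve. ev; try msolve. }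
  destruct (Nat.eq_dec x 0).
  - subst x. rewrite chain0 in Hpos |- *. simpl in Hpos. subst pos.
    exists (S (3 + 1)), m3. split; [|split; [|split]].
    + eapply ExWhileT. exact Hw. exact Eb. apply ExWhileF.
      erewrite ev_ltN. 2: ev. 2: ev; msolve. reflexivity.
    + lia.
    + intros s Hs. replace s with 2%nat by lia. simpl. msolve.
    + intros a Ha H7 H9. msolve.
  - assert (Hp : (pr x < x)%nat) by (apply Hpr; lia).
    rewrite chain_step in Hpos by lia. rewrite length_app in Hpos. simpl in Hpos.
    destruct (IH (pr x) Hp ltac:(lia) m3 (pos-1)%nat) as [t [m' [E [T [C Fr]]]]];
      try (intros; msolve); try lia.
    exists (S (3 + t)), m'. split; [|split; [|split]].
    + eapply ExWhileT. exact Hw. exact Eb. exact E.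
    + lia.
    + intros s Hs. rewrite chain_step by lia. destruct (Nat.eq_dec s pos).
      * subst s. rewrite Fr by lia. rewrite app_nth2 by lia.
        replace (pos - 2 - length (chain (pr x)))%nat with 0%nat by lia.
        simpl. msolve.
      * rewrite C by lia. rewrite app_nth1 by lia. reflexivity.
    + intros a Ha H7 H9. rewrite Fr by lia. msolve.
Qed.

End Chain.

Lemma read_nats_ok l : forall (m : mem) b, (forall s, (s < length l)%nat -> m (b+s)%nat = VN (nth s l 0%nat)) ->
  read_nats m b (length l) = Some l.
Proof.
  induction l as [|a l IH]; intros m b H. reflexivity.
  simpl. rewrite (IH m (S b)). specialize (H 0%nat ltac:(simpl; lia)). rewrite Nat.add_0_r in H.
  rewrite H. reflexivity. intros s Hs. specialize (H (S s) ltac:(simpl; lia)).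
  replace (S b + s)%nat with (b + S s)%nat by lia. rewrite H. reflexivity.
Qed.

Lemma chain_path pr pp : (forall i, (1 <= i <= n)%nat -> (pr i < i)%nat /\ arc n Qcap q (pr i) i /\ pp i = pp (pr i) + ac (pr i) i) ->
  pp 0%nat = 0 ->
  forall x, (x <= n)%nat -> exists l, chain pr x = 0%nat :: l /\ vto x 0 l /\ cost 0 l = pp x.
Proof.
  intros SPR pp0.
  assert (Hpr : forall i, (1 <= i <= n)%nat -> (pr i < i)%nat) by (intros; apply SPR; auto).
  intros x. induction x as [x IH] using (well_founded_induction lt_wf). intros Hx.
  destruct (Nat.eq_dec x 0).
  - subst. exists nil. rewrite chain0 by auto. simpl. auto.
  - destruct (SPR x ltac:(lia)) as [A [B C]].
    destruct (IH (pr x) A ltac:(lia)) as [l [D1 [D2 D3]]].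
    exists (l ++ x :: nil). rewrite chain_step by (auto; lia). rewrite D1. split. reflexivity.
    split. apply (vto_app (pr x)); auto. rewrite (cost_app (pr x)) by auto. lra.
Qed.

Lemma full : exists m' t c k p,
  exec PROG IM t m' /\ (t <= 60 * n)%nat /\ m' 0%nat = VR c /\ m' 1%nat = VN k /\
  read_nats m' 2 k = Some p /\ is_min_cost_path n Qcap q d0 dback dnext p c.
Proof.
  destruct init_ok as [m0 [E0 MI0]].
  destruct (main_loop (n+1-1) 1 0 1 _ _ _ m0 MI0 eq_refl) as (t1 & h & tl & D & pp & pr & m1 & E1 & MI1 & T1).
  destruct MI1 as (_ & F & _ & _ & _ & _ & _ & _ & _ & MP & _ & _ & MPR & pp0 & pr0 & SPR & SOPT & _).
  replace (n+1-1)%nat with n in MP by lia.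
  specialize (MP ltac:(lia)).
  assert (Hpr : forall i, (1 <= i <= n)%nat -> (pr i < i)%nat) by (intros; apply SPR; lia).
  assert (SPR' : forall i, (1 <= i <= n)%nat -> (pr i < i)%nat /\ arc n Qcap q (pr i) i /\ pp i = pp (pr i) + ac (pr i) i)
    by (intros; apply SPR; lia).
  set (L := length (chain pr n)).
  assert (HL : (L <= n + 1)%nat) by (apply chain_len; auto).
  set (r1 := upd m1 (W+7)%nat (VN n)).
  set (r2 := upd r1 (W+8)%nat (VN 1)).
  destruct (loop1_ok pr Hpr n (Nat.le_refl n) r2 1) as [t2 [E2 T2]]; try (intros; msolve).
  set (r3 := upd (upd r2 (W+7)%nat (VN 0)) (W+8)%nat (VN (1 + L - 1))).
  set (r4 := upd r3 (W+7)%nat (VN n)).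
  set (r5 := upd r4 (W+9)%nat (VN (L+1))).
  destruct (loop2_ok pr Hpr n (Nat.le_refl n) r5 (L+1)%nat) as [t3 [r6 [E3 [T3 [C3 Fr3]]]]];
    try (intros; msolve); auto.
  assert (R60 : r6 0%nat = VN n) by (rewrite Fr3 by lia; msolve).
  assert (R68 : r6 (W+8)%nat = VN (1 + L - 1)) by (rewrite Fr3 by lia; msolve).
  assert (R65 : r6 (W+5)%nat = VR (pp n)) by (rewrite Fr3 by lia; msolve).
  set (r7 := upd r6 1%nat (VN (1 + L - 1))).
  set (r8 := upd r7 0%nat (VR (pp n))).
  destruct (chain_path pr pp SPR' pp0 n (Nat.le_refl n)) as [l [P1 [P2 P3]]].
  exists r8, (6 + (t1 + (1 + (1 + (t2 + (1 + (1 + (t3 + (1 + 1)))))))))%nat, (pp n), (1 + L - 1)%nat, (chain pr n).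
  split; [|split; [|split; [|split; [|split]]]].
  - apply ExSeq with (m1 := m0). exact E0.
    apply ExSeq with (m1 := m1). exact E1.
    apply ExSeq with (m1 := r1). apply ExStore. ev; msolve. ev; msolve.
    apply ExSeq with (m1 := r2). apply ExStore. ev; msolve. ev; msolve.
    apply ExSeq with (m1 := r3). exact E2.
    apply ExSeq with (m1 := r4). apply ExStore. ev; msolve. ev; msolve.
    apply ExSeq with (m1 := r5). apply ExStore. ev; msolve. ev; try msolve. lia.
    apply ExSeq with (m1 := r6). exact E3.
    apply ExSeq with (m1 := r7). apply ExStore. ev. ev; msolve.
    apply ExStore. ev. ev; msolve.
  - lia.
  - msolve.
  - msolve.
  - replace (1 + L - 1)%nat with (length (chain pr n)) by (unfold L; lia).
    apply read_nats_ok. intros s Hs. fold L in Hs.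
    assert (r6 (2 + s)%nat = VN (nth (2 + s - 2) (chain pr n) 0%nat)) by (apply C3; lia).
    replace (2 + s - 2)%nat with s in H by lia. msolve.
  - exists l. split; auto. split. apply vf_vto; auto. split. auto.
    intros l' Hl'. apply vf_vto in Hl'. apply SOPT; auto. lia.
Qed.

End Main.

Theorem mainTheorem2 :
  exists (P : stmt) (C : nat),
    forall (n : nat) (Qcap : R) (q d0 dback dnext : nat -> R),
      (1 <= n)%nat ->
      0 <= Qcap ->
      (forall i, (1 <= i <= n)%nat -> 0 <= q i <= Qcap) ->
      exists (m' : mem) (t : nat) (c : R) (k : nat) (p : list nat),
        exec P (input_mem n Qcap q d0 dback dnext) t m' /\
        (t <= C * n)%nat /\
        m' 0%nat = VR c /\
        m' 1%nat = VN k /\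
        read_nats m' 2 k = Some p /\
        is_min_cost_path n Qcap q d0 dback dnext p c.
Proof.
  exists PROG, 60%nat. intros n Qcap q d0 dback dnext Hn HQ Hq.
  apply full; auto.
Qed.
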